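(* Fix integers $2\le r\le k$, a constant $\lambda_{k-r+1}\in\mathbb R$ and a constant $\tau>0$, and let $u(n)$ satisfy $u(n)\to\infty$, $u(n)/n\to0$. Let $t=t(n)$ be integers with $0\le t\le\tau u(n)$, and define $\lambda^{(s)}_j$ as below. Then for every $j\in\{k-r+1,\dots,k\}$, $$\exp\{\lambda^{(t)}_j\}=1+\binom{j}{k-r+1}\frac{t^{\,j-k+r-1}}{n^{\,j-k+r-1}}\bigl(e^{\lambda_{k-r+1}}-1\bigr)+O\Bigl(\frac{u(n)^{j-k+r-2}}{n^{j-k+r-1}}\max\Bigl\{1,\frac{u(n)^2}{n}\Bigr\}\Bigr),$$ where the implied constant depends only on $k,r,\lambda_{k-r+1},\tau$.
   Context: Let $N(s):=n-u(n)-s$. Set $\lambda^{(s)}_{k-r+1}:=\lambda_{k-r+1}$ for all $s=0,1,\dots,t$. For $j=k-r+2,\dots,k$ set $\lambda^{(0)}_j:=0$ and, for $s=1,\dots,t$, $$\lambda^{(s)}_j:=\lambda^{(s-1)}_j+\log\Bigl(1-\frac{j}{N(t-s+1)}+\frac{j}{N(t-s+1)}\exp\{\lambda^{(s-1)}_{j-1}\}\Bigr).$$ *)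

(* Defs.v *)
From Stdlib Require Import Reals Lra Lia Arith.
Open Scope R_scope.

Definition Nval (n un s : nat) : R := INR n - INR un - INR s.

(* lam_iter k r n un t lam s j  =  lambda^{(s)}_j, for the data
   n, u(n) = un, t = t(n), lambda_{k-r+1} = lam.
   lambda^{(s)}_{k-r+1} = lam for all s;
   lambda^{(0)}_j = 0 for j > k-r+1;
   lambda^{(s)}_j = lambda^{(s-1)}_j
       + ln(1 - j/N(t-s+1) + j/N(t-s+1) * exp(lambda^{(s-1)}_{j-1})).
   Values for j < k-r+1 are irrelevant and set to 0. *)
Fixpoint lam_iter (k r n un t : nat) (lam : R) (s j : nat) : R :=
  if Nat.eqb j (k - r + 1) then lam
  else if Nat.ltb (k - r + 1) j then
    match s with
    | O => 0
    | S s' =>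
        let Nv := Nval n un (t - s') in   (* N(t - s + 1) with s = s'+1 *)
        lam_iter k r n un t lam s' j
        + ln (1 - INR j / Nv + INR j / Nv * exp (lam_iter k r n un t lam s' (j - 1)))
    end
  else 0.

(* Main.v *)
Require Import Defs.
From Stdlib Require Import Reals Lra Lia Arith Binomial.
Open Scope R_scope.

Lemma pow_le_one (x : R) (n : nat) : 0 <= x <= 1 -> x ^ n <= 1.
Proof. intros H. rewrite <- (pow1 n). apply pow_incr. lra. Qed.

Definition fpoly (e : nat) (z : R) : R :=
  (z+1)^(S (S e)) - z^(S (S e)) - INR (S (S e)) * z^(S e).

Lemma fpoly_bound (e : nat) (z : R) : 0 <= z ->
  0 <= fpoly e z <= INR (S (S e))^2 * (z+1)^e.
Proof.
  intros Hz. induction e as [|e IH].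
  - unfold fpoly. simpl. nra.
  - assert (Hrec : fpoly (S e) z = (z+1) * fpoly e z + INR (S (S e)) * z^(S e)).
    { unfold fpoly. rewrite !S_INR. simpl. ring. }
    rewrite Hrec.
    assert (H1 : z^(S e) <= (z+1)^(S e)) by (apply pow_incr; lra).
    assert (H2 : 0 <= z^(S e)) by (apply pow_le; lra).
    assert (H3 : 0 <= (z+1)^e) by (apply pow_le; lra).
    assert (H4 : 0 <= INR (S (S e))) by apply pos_INR.
    assert (E : (z+1)^(S e) = (z+1) * (z+1)^e) by reflexivity.
    rewrite E in H1 |- *.
    rewrite (S_INR (S (S e))).
    destruct IH as [IH1 IH2].
    split.
    + apply Rplus_le_le_0_compat; apply Rmult_le_pos; lra.
    + assert (A1 : (z+1) * fpoly e z <= (z+1) * (INR (S (S e))^2 * (z+1)^e))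
        by (apply Rmult_le_compat_l; lra).
      assert (A2 : INR (S (S e)) * z^(S e) <= INR (S (S e)) * ((z+1)*(z+1)^e))
        by (apply Rmult_le_compat_l; lra).
      assert (A3 : 0 <= (z+1)*(z+1)^e) by (apply Rmult_le_pos; lra).
      nra.
Qed.

Lemma binom_id (m d : nat) :
  INR (m + S d) * C (m + d) m = INR (S d) * C (m + S d) m.
Proof.
  unfold C.
  replace (m + S d - m)%nat with (S d) by lia.
  replace (m + d - m)%nat with d by lia.
  replace (m + S d)%nat with (S (m + d)) by lia.
  rewrite !fact_simpl, !mult_INR.
  assert (0 < INR (fact d)) by apply INR_fact_lt_0.
  assert (0 < INR (fact m)) by apply INR_fact_lt_0.
  assert (0 < INR (fact (m+d))) by apply INR_fact_lt_0.
  assert (0 < INR (S d)) by (apply lt_0_INR; lia).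
  field. lra.
Qed.

Lemma C_le_fact (n p k : nat) : (p <= n)%nat -> (n <= k)%nat -> 0 <= C n p <= INR (fact k).
Proof.
  intros Hp Hk. unfold C.
  assert (A1 : 1 <= INR (fact p)) by (apply (le_INR 1); apply lt_O_fact).
  assert (A2 : 1 <= INR (fact (n-p))) by (apply (le_INR 1); apply lt_O_fact).
  assert (A3 : INR (fact n) <= INR (fact k)) by (apply le_INR, fact_le; exact Hk).
  assert (A4 : 0 < INR (fact n)) by apply INR_fact_lt_0.
  split.
  - apply Rmult_le_pos; [lra|]. left; apply Rinv_0_lt_compat; nra.
  - unfold Rdiv. apply Rle_trans with (INR (fact n)); [|exact A3].
    rewrite <- (Rmult_1_r (INR (fact n))) at 2. apply Rmult_le_compat_l; [lra|].
    rewrite <- Rinv_1. apply Rinv_le_contravar; nra.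
Qed.

Lemma C_diag (m : nat) : C (m + 0) m = 1.
Proof. unfold C. rewrite Nat.add_0_r, Nat.sub_diag. simpl.
  assert (0 < INR (fact m)) by apply INR_fact_lt_0. field. lra. Qed.

Ltac posprod := repeat match goal with |- 0 <= _ * _ => apply Rmult_le_pos end.

Section Abstract.
Variables (k m t : nat) (tau c U Nn M : R) (Y : nat -> nat -> R) (Nf : nat -> R).
Hypothesis Htau : 0 < tau.
Hypothesis HU : 1 <= U.
Hypothesis HNn : 0 < Nn.
Hypothesis HT : INR t <= tau * U.
Hypothesis HM1 : 1 <= M.
Hypothesis HM2 : U * U / Nn <= M.
Hypothesis Hx1 : U / Nn <= 1.
Hypothesis HNf : forall s, (s < t)%nat ->
  Nn / 2 <= Nf s /\ Nf s <= Nn /\ Nn - Nf s <= (1 + tau) * U.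
Hypothesis HY0 : forall s, Y s 0%nat = c.
Hypothesis HYz : forall d, Y 0%nat (S d) = 0.
Hypothesis HYs : forall s d, (s < t)%nat -> (m + S d <= k)%nat ->
  Y (S s) (S d) = Y s (S d) + INR (m + S d) / Nf s * (1 + Y s (S d)) * Y s d.

Definition aa := 4 * INR k * tau + 1.
Definition AA (d : nat) := aa ^ d * (Rabs c + 1).
Hypothesis HCk : 4 * INR k * tau * AA k * (U / Nn) <= 1.

Let x := U / Nn.

Lemma x_pos : 0 < x.
Proof. unfold x. apply Rdiv_lt_0_compat; lra. Qed.

Lemma aa_ge1 : 1 <= aa.
Proof. unfold aa. assert (0 <= INR k) by apply pos_INR. nra. Qed.

Lemma AA_pos d : 0 < AA d.
Proof. unfold AA. apply Rmult_lt_0_compat. apply pow_lt. pose aa_ge1; lra.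
  pose proof (Rabs_pos c); lra. Qed.

Lemma AA_mono d e : (d <= e)%nat -> AA d <= AA e.
Proof. intros H. unfold AA. apply Rmult_le_compat_r. pose proof (Rabs_pos c); lra.
  apply Rle_pow; [apply aa_ge1|exact H]. Qed.

Lemma AA_S d : AA (S d) = aa * AA d.
Proof. unfold AA. simpl. ring. Qed.

Lemma frac_bound s j : (s < t)%nat -> (j <= k)%nat ->
  0 <= INR j / Nf s <= 2 * INR k / Nn.
Proof.
  intros Hs Hj. destruct (HNf s Hs) as [H1 [H2 H3]].
  assert (Hjk : INR j <= INR k) by (apply le_INR; exact Hj).
  assert (0 <= INR j) by apply pos_INR.
  assert (HNfp : 0 < Nf s) by lra.
  split. apply Rmult_le_pos; [lra | left; apply Rinv_0_lt_compat; lra].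
  apply Rle_trans with (INR k / Nf s).
  apply Rmult_le_compat_r; [left; apply Rinv_0_lt_compat; lra| exact Hjk].
  unfold Rdiv. replace (2 * INR k * / Nn) with (INR k * / (Nn/2)) by (field; lra).
  apply Rmult_le_compat_l; [apply pos_INR|]. apply Rinv_le_contravar; lra.
Qed.

Lemma crude : forall d, (m + d <= k)%nat -> forall s, (s <= t)%nat ->
  Rabs (Y s d) <= AA d * x ^ d.
Proof.
  induction d as [|d IH]; intros Hd s Hs.
  - rewrite HY0. unfold AA. simpl. lra.
  - set (kap := 4 * INR k / Nn * AA d * x ^ d).
    assert (Hx : 0 < x) by apply x_pos.
    assert (Hxd : x ^ d <= 1) by (apply pow_le_one; unfold x in *; lra).
    assert (Hxd0 : 0 <= x ^ d) by (apply pow_le; lra).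
    assert (HA := AA_pos d).
    assert (HAk : AA d <= AA k) by (apply AA_mono; lia).
    assert (Hk0 : 0 <= INR k) by apply pos_INR.
    assert (Hkap0 : 0 <= kap).
    { unfold kap. apply Rmult_le_pos; [|lra]. apply Rmult_le_pos; [|lra].
      apply Rmult_le_pos; [lra | left; apply Rinv_0_lt_compat; lra]. }
    assert (Htk : INR t * kap <= 4 * INR k * tau * AA d * x ^ (S d)).
    { apply Rle_trans with (tau * U * kap). apply Rmult_le_compat_r; lra.
      unfold kap. simpl. unfold x. right. field. lra. }
    assert (Htk2 : 4 * INR k * tau * AA d * x ^ (S d) <= 4 * INR k * tau * AA k * x).
    { simpl. assert (x * x ^ d <= x) by nra.
      assert (0 <= 4 * INR k * tau) by nra.
      apply Rle_trans with (4 * INR k * tau * AA k * (x * x^d)).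
      apply Rmult_le_compat_r; [nra|]. apply Rmult_le_compat_l; nra.
      apply Rmult_le_compat_l; [|assumption]. pose proof (AA_pos k); nra. }
    assert (Htk1 : INR t * kap <= 1) by (unfold x in *; lra).
    assert (Hinner : forall s, (s <= t)%nat -> Rabs (Y s (S d)) <= INR s * kap).
    { clear s Hs. intros s; induction s as [|s IHs]; intros Hs'.
      - rewrite HYz, Rabs_R0. simpl. lra.
      - assert (Hst : (s < t)%nat) by lia.
        specialize (IHs ltac:(lia)).
        rewrite (HYs s d Hst Hd).
        assert (Hsk : INR s * kap <= INR t * kap).
        { apply Rmult_le_compat_r; [lra|]. apply le_INR; lia. }
        destruct (frac_bound s (m + S d) Hst Hd) as [F1 F2].
        assert (Hy' := IH ltac:(lia) s ltac:(lia)).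
        assert (Hone : Rabs (1 + Y s (S d)) <= 2).
        { apply Rle_trans with (Rabs 1 + Rabs (Y s (S d))). apply Rabs_triang.
          rewrite Rabs_R1. lra. }
        assert (Hprod : Rabs (INR (m + S d) / Nf s * (1 + Y s (S d)) * Y s d) <= kap).
        { rewrite !Rabs_mult, (Rabs_right (INR (m + S d) / Nf s)) by lra.
          unfold kap.
          replace (4 * INR k / Nn * AA d * x ^ d) with ((2 * INR k / Nn) * 2 * (AA d * x^d))
            by (field; lra).
          apply Rmult_le_compat; try apply Rabs_pos.
          apply Rmult_le_pos; [lra| apply Rabs_pos].
          apply Rmult_le_compat; try lra; apply Rabs_pos. exact Hy'. }
        rewrite S_INR.
        apply Rle_trans with (Rabs (Y s (S d)) + Rabs (INR (m + S d) / Nf s * (1 + Y s (S d)) * Y s d)).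
        apply Rabs_triang. lra. }
    apply Rle_trans with (INR t * kap). 
    apply Rle_trans with (INR s * kap). apply Hinner; exact Hs.
    apply Rmult_le_compat_r; [lra|]. apply le_INR; exact Hs.
    apply Rle_trans with (4 * INR k * tau * AA d * x ^ (S d)); [exact Htk|].
    rewrite AA_S. apply Rmult_le_compat_r; [apply pow_le; lra|].
    apply Rmult_le_compat_r; [lra|]. unfold aa. lra.
Qed.

Definition Cb d := C (m + d) m.
Definition PP d s := Cb d * c * (INR s / Nn) ^ d.
Definition beta d := x ^ d * M / (U * U).
Definition FF := INR (fact k) * Rabs c * INR k ^ 2 * (tau + 1) ^ k.
Fixpoint GG d := match d with
  | O => 0
  | S d' => 2 * INR k * (1 + tau) * AA d' + 2 * INR k * AA (S d') * AA d'
            + (INR k * tau + 1) * GG d' + FF end.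

Lemma FF_nonneg : 0 <= FF.
Proof. unfold FF. assert (0 <= INR (fact k)) by apply pos_INR.
  assert (0 <= (tau+1)^k) by (apply pow_le; lra).
  assert (0 <= INR k ^ 2) by (apply pow_le; apply pos_INR).
  pose proof (Rabs_pos c). apply Rmult_le_pos; [|lra]. apply Rmult_le_pos; [|lra]. apply Rmult_le_pos; lra. Qed.

Lemma GG_nonneg d : 0 <= GG d.
Proof. induction d; simpl. lra.
  pose proof (AA_pos d); pose proof (AA_pos (S d)); pose proof FF_nonneg.
  assert (0 <= INR k) by apply pos_INR.
  assert (0 <= INR k * tau + 1) by nra.
  assert (0 <= 2 * INR k * (1 + tau) * AA d) by (posprod; lra).
  assert (0 <= 2 * INR k * AA (S d) * AA d) by (posprod; lra).
  assert (0 <= (INR k * tau + 1) * GG d) by (apply Rmult_le_pos; lra).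
  lra. Qed.

Lemma GG_mono d e : (d <= e)%nat -> GG d <= GG e.
Proof. induction 1. lra. apply Rle_trans with (GG m0); auto. simpl.
  pose proof (AA_pos m0); pose proof (AA_pos (S m0)); pose proof FF_nonneg.
  pose proof (GG_nonneg m0).
  assert (0 <= INR k) by apply pos_INR.
  assert (0 <= 2 * INR k * (1 + tau) * AA m0) by (posprod; lra).
  assert (0 <= 2 * INR k * AA (S m0) * AA m0) by (posprod; lra).
  assert (0 <= INR k * tau * GG m0) by (posprod; lra).
  nra. Qed.

Lemma beta_S d : beta (S d) = x * beta d.
Proof. unfold beta. simpl. field. lra. Qed.

Lemma beta_nonneg d : 0 <= beta d.
Proof. unfold beta. pose proof x_pos. apply Rmult_le_pos.
  apply Rmult_le_pos; [apply pow_le|]; lra. left; apply Rinv_0_lt_compat; nra. Qed.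

Lemma iN_le : / Nn <= M / (U * U).
Proof. apply Rmult_le_reg_l with (U * U). nra.
  replace (U * U * (M / (U * U))) with M by (field; lra).
  unfold Rdiv in HM2. lra. Qed.

Lemma xiN_le d : x ^ (S d) * / Nn <= beta (S d).
Proof. unfold beta. replace (x ^ S d * M / (U * U)) with (x ^ S d * (M / (U * U))) by (field; lra). apply Rmult_le_compat_l.
  apply pow_le; pose proof x_pos; lra. exact iN_le. Qed.

Lemma T4_eq d s : INR (m + S d) / Nn * PP d s - (PP (S d) (S s) - PP (S d) s)
  = - (Cb (S d) * c * (/ Nn) ^ (S d)) *
      ((INR s + 1) ^ (S d) - INR s ^ (S d) - INR (S d) * INR s ^ d).
Proof.
  assert (Hb := binom_id m d). unfold PP, Cb. rewrite (S_INR s).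
  unfold Rdiv. rewrite !Rpow_mult_distr.
  transitivity ((/Nn)^(S d) * c * INR s ^ d * (INR (m + S d) * C (m + d) m - INR (S d) * C (m + S d) m)
    - (C (m + S d) m * c * (/ Nn) ^ (S d)) *
      ((INR s + 1) ^ (S d) - INR s ^ (S d) - INR (S d) * INR s ^ d)).
  - cbn [pow]. ring.
  - rewrite Hb. ring.
Qed.

Lemma T4_bound d s : (s < t)%nat -> (m + S d <= k)%nat ->
  Rabs (INR (m + S d) / Nn * PP d s - (PP (S d) (S s) - PP (S d) s)) <= FF * beta (S d).
Proof.
  intros Hs Hd. rewrite T4_eq.
  assert (HFb : 0 <= FF * beta (S d)) by (apply Rmult_le_pos; [apply FF_nonneg|apply beta_nonneg]).
  destruct d as [|e].
  - replace ((INR s + 1) ^ 1 - INR s ^ 1 - INR 1 * INR s ^ 0) with 0 by (simpl; ring).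
    rewrite Rmult_0_r, Rabs_R0. exact HFb.
  - change ((INR s + 1) ^ S (S e) - INR s ^ S (S e) - INR (S (S e)) * INR s ^ S e) with (fpoly e (INR s)).
    set (z := INR s).
    assert (Hz : 0 <= z) by apply pos_INR.
    assert (Hz1 : z + 1 <= (tau + 1) * U).
    { unfold z. rewrite <- S_INR. apply Rle_trans with (INR t). apply le_INR; lia. lra. }
    destruct (fpoly_bound e z Hz) as [F0 F1].
    assert (P1 : (z+1)^e <= (tau+1)^k * U^e).
    { apply Rle_trans with (((tau+1)*U)^e).
      apply pow_incr; lra. rewrite Rpow_mult_distr. apply Rmult_le_compat_r.
      apply pow_le; lra. apply Rle_pow; [lra|lia]. }
    assert (P2 : INR (S (S e)) ^ 2 <= INR k ^ 2).
    { apply pow_incr. split; [apply pos_INR| apply le_INR; lia]. }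
    destruct (C_le_fact (m + S (S e)) m k ltac:(lia) Hd) as [C0 C1].
    fold (Cb (S (S e))) in C0, C1.
    assert (Hi : 0 <= (/ Nn) ^ S (S e)) by (apply pow_le; left; apply Rinv_0_lt_compat; lra).
    assert (Hk2 : 0 <= INR k ^ 2) by (apply pow_le; apply pos_INR).
    assert (Htk : 0 <= (tau+1)^k) by (apply pow_le; lra).
    assert (HUe : 0 <= U^e) by (apply pow_le; lra).
    assert (Hf : fpoly e z <= INR k ^ 2 * ((tau+1)^k * U^e)).
    { apply Rle_trans with (INR (S (S e)) ^ 2 * (z + 1) ^ e). exact F1.
      apply Rmult_le_compat; try lra. apply pow_le, pos_INR. apply pow_le; lra. }
    set (Q := INR (fact k) * Rabs c * (/ Nn) ^ S (S e) * (INR k ^ 2 * ((tau+1)^k * U^e))).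
    assert (HQ : 0 <= Q).
    { unfold Q. pose proof (Rabs_pos c). pose proof (pos_INR (fact k)). posprod; lra. }
    assert (HQM : FF * beta (S (S e)) = Q * M).
    { unfold FF, beta, Q, x. unfold Rdiv. rewrite Rpow_mult_distr. cbn [pow]. field. lra. }
    rewrite HQM.
    apply Rle_trans with Q; [| pose proof (Rmult_le_compat_l Q 1 M HQ HM1); lra].
    rewrite Rabs_mult, Rabs_Ropp, !Rabs_mult.
    rewrite (Rabs_right (Cb _)) by lra. rewrite (Rabs_right ((/Nn)^_)) by lra.
    rewrite (Rabs_right (fpoly e z)) by lra.
    unfold Q. apply Rmult_le_compat; try lra.
    + pose proof (Rabs_pos c). posprod; lra.
    + apply Rmult_le_compat_r; [lra|]. apply Rmult_le_compat_r; [apply Rabs_pos| lra].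
Qed.

Lemma fine : forall d, (m + d <= k)%nat -> forall s, (s <= t)%nat ->
  Rabs (Y s d - PP d s) <= INR s * GG d * beta d.
Proof.
  induction d as [|d IH]; intros Hd s Hs.
  - rewrite HY0. unfold PP, Cb. rewrite C_diag. simpl GG.
    replace (c - 1 * c * (INR s / Nn) ^ 0) with 0 by (simpl; ring).
    rewrite Rabs_R0. rewrite Rmult_0_r, Rmult_0_l. lra.
  - revert Hs; induction s as [|s IHs]; intros Hs.
    + rewrite HYz. unfold PP.
      replace (0 - Cb (S d) * c * (INR 0 / Nn) ^ S d) with 0 by (cbn [pow INR]; unfold Rdiv; ring).
      rewrite Rabs_R0. simpl INR. rewrite !Rmult_0_l. lra.
    + assert (Hst : (s < t)%nat) by lia.
      specialize (IHs ltac:(lia)).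
      rewrite (HYs s d Hst Hd).
      set (j := INR (m + S d)). set (N := Nf s). set (y := Y s (S d)). set (y' := Y s d).
      destruct (HNf s Hst) as [N1 [N2 N3]]. fold N in N1, N2, N3.
      assert (HNp : 0 < N) by lra.
      destruct (frac_bound s (m + S d) Hst Hd) as [F1 F2]. fold j N in F1, F2.
      assert (Hj0 : 0 <= j) by apply pos_INR.
      assert (Hjk : j <= INR k) by (apply le_INR; exact Hd).
      assert (Hx := x_pos).
      assert (Hcy := crude (S d) Hd s ltac:(lia)). fold y in Hcy.
      assert (Hcy' := crude d ltac:(lia) s ltac:(lia)). fold y' in Hcy'.
      assert (Hxd : x ^ d <= 1) by (apply pow_le_one; unfold x in *; lra).
      assert (Hxd0 : 0 <= x ^ d) by (apply pow_le; lra).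
      assert (HxSd0 : 0 <= x ^ S d) by (apply pow_le; lra).
      assert (HAd := AA_pos d). assert (HASd := AA_pos (S d)).
      assert (Hb := beta_nonneg (S d)). assert (Hbd := beta_nonneg d).
      assert (HG := GG_nonneg d).
      assert (Hk0 : 0 <= INR k) by apply pos_INR.
      assert (HiN : 0 < / Nn) by (apply Rinv_0_lt_compat; lra).
      assert (HxiN := xiN_le d).
      assert (Hsplit : y + j / N * (1 + y) * y' - PP (S d) (S s) =
        (y - PP (S d) s) + (j / N - j / Nn) * y' + j / N * y * y'
        + j / Nn * (y' - PP d s) + (j / Nn * PP d s - (PP (S d) (S s) - PP (S d) s))) by ring.
      rewrite Hsplit.
      assert (B1 : Rabs ((j / N - j / Nn) * y') <= 2 * INR k * (1 + tau) * AA d * beta (S d)).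
      { assert (E : j / N - j / Nn = j * (Nn - N) * / (N * Nn)) by (field; lra).
        assert (D0 : 0 <= j * (Nn - N) * / (N * Nn)).
        { apply Rmult_le_pos. nra. left. apply Rinv_0_lt_compat. nra. }
        assert (D1 : j * (Nn - N) * / (N * Nn) <= INR k * ((1 + tau) * U) * / (Nn / 2 * Nn)).
        { apply Rmult_le_compat. nra. left; apply Rinv_0_lt_compat; nra.
          apply Rmult_le_compat; lra. apply Rinv_le_contravar; nra. }
        rewrite Rabs_mult, E, Rabs_right by lra.
        apply Rle_trans with ((INR k * ((1 + tau) * U) * / (Nn / 2 * Nn)) * (AA d * x ^ d)).
        apply Rmult_le_compat; try lra. apply Rabs_pos.
        replace (INR k * ((1 + tau) * U) * / (Nn / 2 * Nn) * (AA d * x ^ d))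
          with (2 * INR k * (1 + tau) * AA d * (x ^ S d * / Nn))
          by (unfold x; cbn [pow]; field; lra).
        apply Rmult_le_compat_l. posprod; lra. exact HxiN. }
      assert (B2 : Rabs (j / N * y * y') <= 2 * INR k * AA (S d) * AA d * beta (S d)).
      { rewrite !Rabs_mult, (Rabs_right (j / N)) by lra.
        apply Rle_trans with ((2 * INR k / Nn) * (AA (S d) * x ^ S d) * AA d).
        apply Rmult_le_compat; try lra. apply Rmult_le_pos; [lra|apply Rabs_pos]. apply Rabs_pos.
        apply Rmult_le_compat; try lra. apply Rabs_pos.
        apply Rle_trans with (AA d * x ^ d); [exact Hcy'|]. nra.
        replace (2 * INR k / Nn * (AA (S d) * x ^ S d) * AA d)
          with (2 * INR k * AA (S d) * AA d * (x ^ S d * / Nn)) by (field; lra).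
        apply Rmult_le_compat_l. posprod; lra. exact HxiN. }
      assert (B3 : Rabs (j / Nn * (y' - PP d s)) <= INR k * tau * GG d * beta (S d)).
      { assert (IHd := IH ltac:(lia) s ltac:(lia)). fold y' in IHd.
        assert (Hs0 : INR s <= tau * U) by (apply Rle_trans with (INR t); [apply le_INR; lia| exact HT]).
        assert (Hs00 : 0 <= INR s) by apply pos_INR.
        rewrite Rabs_mult, (Rabs_right (j / Nn)) by (apply Rle_ge; apply Rmult_le_pos; lra).
        apply Rle_trans with ((INR k / Nn) * (tau * U * GG d * beta d)).
        apply Rmult_le_compat; try lra. apply Rmult_le_pos; lra. apply Rabs_pos.
        apply Rmult_le_compat_r; lra.
        apply Rle_trans with (INR s * GG d * beta d); [exact IHd|].
        apply Rmult_le_compat_r; [lra|]. apply Rmult_le_compat_r; lra.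
        rewrite beta_S. unfold x. right. field. lra. }
      assert (B4 := T4_bound d s Hst Hd). fold j in B4.
      assert (B0 := IHs). fold y in B0.
      set (T1 := (j / N - j / Nn) * y') in *.
      set (T2 := j / N * y * y') in *.
      set (T3 := j / Nn * (y' - PP d s)) in *.
      set (T4 := j / Nn * PP d s - (PP (S d) (S s) - PP (S d) s)) in *.
      set (T0 := y - PP (S d) s) in *.
      assert (Tri : Rabs (T0 + T1 + T2 + T3 + T4) <= Rabs T0 + Rabs T1 + Rabs T2 + Rabs T3 + Rabs T4).
      { repeat (eapply Rle_trans; [apply Rabs_triang|]; apply Rplus_le_compat_r). lra. }
      rewrite S_INR. simpl GG.
      assert (HGb : 0 <= GG d * beta (S d)) by (apply Rmult_le_pos; lra).
      assert (HGS : 0 <= INR s * GG (S d) * beta (S d)).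
      { apply Rmult_le_pos; [apply Rmult_le_pos; [apply pos_INR| apply GG_nonneg]|lra]. }
      simpl GG in B0.
      set (G' := 2 * INR k * (1 + tau) * AA d + 2 * INR k * AA (S d) * AA d +
            (INR k * tau + 1) * GG d + FF) in *.
      assert (Hsum : 2 * INR k * (1 + tau) * AA d * beta (S d) + 2 * INR k * AA (S d) * AA d * beta (S d)
         + INR k * tau * GG d * beta (S d) + FF * beta (S d) + GG d * beta (S d) = G' * beta (S d))
        by (unfold G'; ring).
      replace ((INR s + 1) * G' * beta (S d)) with (INR s * G' * beta (S d) + G' * beta (S d)) by ring.
      lra.
Qed.

Lemma final_bound d : (m + d <= k)%nat ->
  Rabs (Y t d - PP d t) <= tau * GG k * (powerRZ U (Z.of_nat d - 1) / Nn ^ d * M).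
Proof.
  intros Hd. eapply Rle_trans; [apply (fine d Hd t (Nat.le_refl t))|].
  assert (HGk : 0 <= GG k) by apply GG_nonneg.
  assert (HGd : GG d <= GG k) by (apply GG_mono; lia).
  assert (Hbd := beta_nonneg d).
  assert (Ht0 : 0 <= INR t) by apply pos_INR.
  destruct d as [|d].
  - simpl GG. rewrite Rmult_0_r, Rmult_0_l.
    apply Rmult_le_pos; [nra|]. apply Rmult_le_pos; [|lra].
    simpl pow. unfold Rdiv. rewrite Rinv_1, Rmult_1_r. left; apply powerRZ_lt; lra.
  - replace (Z.of_nat (S d) - 1)%Z with (Z.of_nat d) by lia.
    rewrite <- pow_powerRZ.
    apply Rle_trans with (tau * U * GG k * beta (S d)).
    + apply Rmult_le_compat_r; [lra|]. pose proof (GG_nonneg (S d)); apply Rmult_le_compat; lra.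
    + right. unfold beta, x. unfold Rdiv. rewrite Rpow_mult_distr. cbn [pow].
      rewrite pow_inv. field. split; [|lra]. apply pow_nonzero; lra.
Qed.
End Abstract.

Lemma lam_base k r n un t lam s : lam_iter k r n un t lam s (k - r + 1) = lam.
Proof. destruct s; cbn [lam_iter]; rewrite Nat.eqb_refl; reflexivity. Qed.

Lemma lam_zero k r n un t lam j : (k - r + 1 < j)%nat -> lam_iter k r n un t lam 0 j = 0.
Proof. intros H. cbn [lam_iter].
  rewrite (proj2 (Nat.eqb_neq _ _)) by lia. rewrite (proj2 (Nat.ltb_lt _ _)) by lia. reflexivity. Qed.

Lemma lam_step k r n un t lam s j : (k - r + 1 < j)%nat ->
  lam_iter k r n un t lam (S s) j = lam_iter k r n un t lam s j
    + ln (1 - INR j / Nval n un (t - s) + INR j / Nval n un (t - s) * exp (lam_iter k r n un t lam s (j - 1))).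
Proof. intros H. cbn [lam_iter].
  rewrite (proj2 (Nat.eqb_neq _ _)) by lia. rewrite (proj2 (Nat.ltb_lt _ _)) by lia. reflexivity. Qed.

Theorem mainTheorem10 :
  forall (k r : nat) (lam tau : R),
    (2 <= r)%nat -> (r <= k)%nat -> 0 < tau ->
    exists K : R, 0 <= K /\
    forall (u t : nat -> nat),
      (forall M : R, exists N0 : nat, forall n : nat, (n >= N0)%nat -> INR (u n) >= M) ->
      Un_cv (fun n => INR (u n) / INR n) 0 ->
      (forall n : nat, INR (t n) <= tau * INR (u n)) ->
      exists N0 : nat, forall n : nat, (n >= N0)%nat ->
        forall j : nat, (k - r + 1 <= j)%nat -> (j <= k)%nat ->
          Rabs (exp (lam_iter k r n (u n) (t n) lam (t n) j)
                - (1 + Binomial.C j (k - r + 1)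
                       * (INR (t n) ^ (j - (k - r + 1)) / INR n ^ (j - (k - r + 1)))
                       * (exp lam - 1)))
          <= K * (powerRZ (INR (u n)) (Z.of_nat (j - (k - r + 1)) - 1)
                  / INR n ^ (j - (k - r + 1))
                  * Rmax 1 (INR (u n) ^ 2 / INR n)).
Proof.
  intros k r lam tau Hr Hrk Htau.
  set (m := (k - r + 1)%nat).
  set (c := exp lam - 1).
  exists (tau * GG k tau c k). split.
  { apply Rmult_le_pos; [lra| apply GG_nonneg; exact Htau]. }
  intros u t Hu Hcv Ht.
  set (A := AA k tau c k).
  assert (HA : 0 < A) by (apply AA_pos; exact Htau).
  assert (Hk2 : 2 <= INR k) by (apply (le_INR 2); lia).
  set (W := 4 * INR k * tau * A).
  assert (HW : 0 <= W) by (unfold W; posprod; lra).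
  set (D := 8 * INR k * (1 + tau) * (W + 1)).
  assert (HD1 : 16 <= 8 * INR k * (1 + tau)) by nra.
  assert (HD : 16 <= D) by (unfold D; nra).
  assert (HDW : W <= D) by (unfold D; nra).
  assert (HD2 : 2 * (1 + tau) <= D) by (unfold D; nra).
  assert (HD3 : 4 * INR k <= D) by (unfold D; nra).
  destruct (Hu 1) as [N1 HN1].
  destruct (Hcv (/ D) ltac:(apply Rinv_0_lt_compat; lra)) as [N2 HN2].
  exists (S (max N1 N2)). intros n Hn j Hj1 Hj2.
  set (U := INR (u n)). set (Nn := INR n).
  assert (HU : 1 <= U) by (unfold U; specialize (HN1 n ltac:(lia)); lra).
  assert (HNn : 1 <= Nn) by (unfold Nn; apply (le_INR 1); lia).
  assert (Hx : U / Nn * D < 1).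
  { specialize (HN2 n ltac:(lia)). unfold R_dist in HN2. rewrite Rminus_0_r in HN2.
    rewrite Rabs_right in HN2. fold U Nn in HN2.
    apply Rmult_lt_reg_r with (/ D). apply Rinv_0_lt_compat; lra.
    rewrite Rmult_assoc, Rinv_r, Rmult_1_l, Rmult_1_r by lra. exact HN2.
    apply Rle_ge. apply Rmult_le_pos; [unfold U; apply pos_INR| left; apply Rinv_0_lt_compat; unfold Nn in *; lra]. }
  assert (HUD : U * D < Nn).
  { replace (U * D) with ((U / Nn * D) * Nn) by (field; lra).
    nra. }
  assert (Hx0 : 0 < U / Nn) by (apply Rdiv_lt_0_compat; lra).
  assert (C1 : (1 + tau) * U <= Nn / 2) by nra.
  assert (C2 : 4 * INR k <= Nn) by nra.
  assert (C3 : 4 * INR k * tau * A * (U / Nn) <= 1).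
  { fold W. assert (W * (U / Nn) <= D * (U/Nn)) by (apply Rmult_le_compat_r; lra). nra. }
  assert (C4 : U / Nn <= 1) by nra.
  destruct (Nat.le_exists_sub m j Hj1) as [d [Hd _]]. subst j.
  replace (d + m - m)%nat with d by lia. rewrite (Nat.add_comm d m).
  assert (Hdk : (m + d <= k)%nat) by lia.
  clear Hj1 Hj2.
  set (Y := fun s d => exp (lam_iter k r n (u n) (t n) lam s (m + d)) - 1).
  set (Nf := fun s => Nval n (u n) (t n - s)).
  assert (HNf : forall s, (s < t n)%nat -> Nn/2 <= Nf s /\ Nf s <= Nn /\ Nn - Nf s <= (1+tau)*U).
  { intros s Hs. unfold Nf, Nval. fold U Nn. rewrite minus_INR by lia.
    assert (0 <= INR s) by apply pos_INR.
    assert (INR s + 1 <= INR (t n)) by (rewrite <- S_INR; apply le_INR; lia).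
    specialize (Ht n). fold U in Ht. split; [|split]; lra. }
  assert (HY0 : forall s, Y s 0%nat = c).
  { intros s. unfold Y. rewrite Nat.add_0_r. unfold m. rewrite lam_base. reflexivity. }
  assert (HYz : forall d, Y 0%nat (S d) = 0).
  { intros d'. unfold Y. rewrite lam_zero by (unfold m; lia). rewrite exp_0; ring. }
  assert (HYs : forall s d, (s < t n)%nat -> (m + S d <= k)%nat ->
     Y (S s) (S d) = Y s (S d) + INR (m + S d) / Nf s * (1 + Y s (S d)) * Y s d).
  { intros s d' Hs Hd'. unfold Y, Nf. rewrite lam_step by (unfold m; lia).
    replace (m + S d' - 1)%nat with (m + d')%nat by lia.
    destruct (HNf s Hs) as [N1' [N2' N3']]. unfold Nf in N1', N2', N3'.
    set (NN := Nval n (u n) (t n - s)) in *.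
    set (q := INR (m + S d') / NN).
    assert (Hq0 : 0 <= q).
    { unfold q. apply Rmult_le_pos; [apply pos_INR| left; apply Rinv_0_lt_compat; lra]. }
    assert (Hq1 : q <= 1/2).
    { unfold q. assert (INR (m + S d') <= INR k) by (apply le_INR; lia).
      apply Rle_trans with (INR k / (Nn / 2)).
      apply Rle_trans with (INR k / NN).
      apply Rmult_le_compat_r; [left; apply Rinv_0_lt_compat; lra| lra].
      apply Rmult_le_compat_l; [apply pos_INR|]. apply Rinv_le_contravar; lra.
      apply Rmult_le_reg_r with (Nn / 2). lra. unfold Rdiv. rewrite Rmult_assoc, Rinv_l by lra. lra. }
    set (a := lam_iter k r n (u n) (t n) lam s (m + S d')).
    set (b := lam_iter k r n (u n) (t n) lam s (m + d')).
    assert (Hb := exp_pos b).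
    rewrite exp_plus, exp_ln by nra. ring. }
  assert (HM2 : U * U / Nn <= Rmax 1 (U ^ 2 / Nn)).
  { replace (U ^ 2) with (U * U) by ring. apply Rmax_r. }
  replace (exp (lam_iter k r n (u n) (t n) lam (t n) (m + d)) -
      (1 + C (m + d) m * (INR (t n) ^ d / Nn ^ d) * c))
    with (Y (t n) d - PP m c Nn d (t n)).
  2: { unfold Y, PP, Cb, c. unfold Rdiv. rewrite Rpow_mult_distr, pow_inv. ring. }
  apply (final_bound k m (t n) tau c U Nn (Rmax 1 (U ^ 2 / Nn)) Y Nf Htau HU ltac:(lra)
    (Ht n) (Rmax_l _ _) HM2 C4 HNf HY0 HYz HYs C3 d Hdk).
Qed.
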